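(* Let $A$ be a finite abelian $p$-group written additively, with a decomposition $A=A_1\oplus\dots\oplus A_k$ into nontrivial homocyclic components of pairwise different exponents, and let $H$ be a finite group of order not divisible by $p$. Let $\Lambda:\mathrm{Aut}(A)\to\mathrm{Aut}(A_1/pA_1)\times\dots\times\mathrm{Aut}(A_k/pA_k)$ be the surjective homomorphism sending an automorphism, written as a matrix $(u_{ij})$ with $u_{ij}\in\mathrm{Hom}(A_i,A_j)$ (so that $x=(x_1,\dots,x_k)\mapsto(\sum_i u_{i1}(x_i),\dots,\sum_i u_{ik}(x_i))$), to $(\overline{u_{11}},\dots,\overline{u_{kk}})$ where $\overline{u_{ii}}(x+pA_i)=u_{ii}(x)+pA_i$, and let $\Lambda_i:\mathrm{Aut}(A)\to\mathrm{Aut}(A_i/pA_i)$ be $\Lambda$ followed by projection to the $i$-th factor. Then for representations $\alpha,\beta:H\to\mathrm{Aut}(A)$ we have $\alpha\sim\beta$ if and only if $\alpha\circ\Lambda_i\sim\beta\circ\Lambda_i$ for all $i=1,\dots,k$ (here $\alpha\circ\Lambda_i$ means first $\alpha$, then $\Lambda_i$).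
   Context: A representation of $H$ on an abelian group $B$ is a homomorphism $H\to\mathrm{Aut}(B)$. $\mathrm{Aut}(B)$ acts on representations by $\alpha^\psi(h)=\psi^{-1}\alpha(h)\psi$, and $\alpha\sim\beta$ means $\alpha^\psi=\beta$ for some $\psi\in\mathrm{Aut}(B)$. An abelian $p$-group is homocyclic if it is a direct product of cyclic groups of the same order. Maps are composed left to right. *)

(* Defs.v *)
From mathcomp Require Import all_boot all_fingroup all_solvable.
Set Implicit Arguments. Unset Strict Implicit. Unset Printing Implicit Defensive.
Local Open Scope group_scope.

(* Groups are written multiplicatively in MathComp: "pA" is the subgroup of
   p-th powers, and permutations compose left to right: (s * t) x = t (s x),
   x ^ y = y^-1 * x * y, matching the paper's conventions. *)

(* p A = the subgroup {x^p | x in A} (generated; equal to the set for abelian A) *)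
Definition pmult (gT : finGroupType) (p : nat) (G : {set gT}) : {group gT} :=
  <<[set x ^+ p | x in G]>>%G.

Definition compl_comp (gT : finGroupType) (k : nat) (Ai : 'I_k -> {group gT})
  (i : 'I_k) : {set gT} := \prod_(j < k | j != i) Ai j.

Definition proj_comp (gT : finGroupType) (k : nat) (Ai : 'I_k -> {group gT})
  (i : 'I_k) (x : gT) : gT := remgr (compl_comp Ai i) (Ai i) x.

(* Lambda_i u : A_i/pA_i -> A_i/pA_i,  x + pA_i |-> u_ii(x) + pA_i,
   where u_ii(x) = i-th coordinate of u(x) *)
Definition Lambda_i (gT : finGroupType) (p k : nat) (Ai : 'I_k -> {group gT})
  (i : 'I_k) (u : {perm gT}) (c : coset_of (pmult p (Ai i)))
  : coset_of (pmult p (Ai i)) :=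
  coset (pmult p (Ai i)) (proj_comp Ai i (u (repr c))).

Definition is_rep (gT hT : finGroupType) (B : {set gT}) (H : {group hT})
  (alpha : hT -> {perm gT}) : Prop :=
  morphic H alpha /\ {in H, forall h, alpha h \in Aut B}.

Definition rep_equiv (gT hT : finGroupType) (B : {set gT}) (H : {set hT})
  (alpha beta : hT -> {perm gT}) : Prop :=
  exists2 psi, psi \in Aut B & {in H, forall h, alpha h ^ psi = beta h}.

(* (alpha o Lambda_i) ~ (beta o Lambda_i): some psi in Aut(A_i/pA_i) with
   psi^-1 (Lambda_i (alpha h)) psi = Lambda_i (beta h) (left-to-right
   composition), i.e. psi (Lambda_i (alpha h) c) = Lambda_i (beta h) (psi c)
   for all c in A_i/pA_i. *)
Definition lam_equiv (gT hT : finGroupType) (p k : nat) (Ai : 'I_k -> {group gT})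
  (i : 'I_k) (H : {set hT}) (alpha beta : hT -> {perm gT}) : Prop :=
  exists2 psi : {perm coset_of (pmult p (Ai i))},
    psi \in Aut (Ai i / pmult p (Ai i)) &
    {in H, forall h, {in Ai i / pmult p (Ai i), forall c,
       psi (@Lambda_i gT p k Ai i (alpha h) c) = @Lambda_i gT p k Ai i (beta h) (psi c)}}.

(* Main.v *)
Require Import Defs.
From mathcomp Require Import all_boot all_fingroup all_solvable.
Set Implicit Arguments. Unset Strict Implicit. Unset Printing Implicit Defensive.
Local Open Scope group_scope.

Section Generic.
Variable gT : finGroupType.
Implicit Types G H N : {group gT}.

Lemma pmult_Mho (p : nat) G : p.-group G -> (pmult p G : {set gT}) = 'Mho^1(G).
Proof. by move=> pG; rewrite (MhoE 1 pG) expn1. Qed.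

Lemma pmult_Mhoab (p : nat) G : p.-group G -> abelian G ->
  (pmult p G : {set gT}) = [set x ^+ p | x in G].
Proof. by move=> pG cG; rewrite pmult_Mho // (MhoEabelian 1 pG cG) expn1. Qed.

Lemma homocyclic_low (p : nat) G y m : prime p -> p.-group G -> homocyclic G ->
  y \in G -> p.-nat m -> y ^+ m = 1 -> m < exponent G -> y \in 'Mho^1(G).
Proof.
move=> pr_p pG hG Gy pm ym lt.
have [e De] : {e | exponent G = (p ^ e)%N}.
  by apply: p_natP; rewrite pnat_exponent.
have [a Da] := p_natP pm.
rewrite De Da ltn_exp2l ?prime_gt1 // in lt.
have: y \in 'Ohm_a(G).
  rewrite (OhmEabelian pG) ?(abelianS (Ohm_sub a G)) //; last by case/andP: hG.
  by rewrite !inE Gy -Da ym eqxx.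
rewrite (homocyclic_Ohm_Mho a pG hG) De pfactorK //.
apply: subsetP; apply: Mho_leq; by rewrite subn_gt0.
Qed.

Lemma morph_agree (rT : finGroupType) G (X : {set gT}) (f g : gT -> rT) :
  {in G &, {morph f : x y / x * y}} -> {in G &, {morph g : x y / x * y}} ->
  X \subset G -> {in X, f =1 g} -> {in <<X>>, f =1 g}.
Proof.
move=> fM gM sXG eqX.
pose F := Morphism fM; pose Gm := Morphism gM.
have gS : group_set [set y in G | f y == g y].
  apply/group_setP; split.
    by rewrite inE group1 /= -[f 1]/(F 1) -[g 1]/(Gm 1) !morph1.
  move=> x y; rewrite !inE => /andP[Gx /eqP ex] /andP[Gy /eqP ey].
  by rewrite groupM //= fM // gM // ex ey.
have: <<X>> \subset Group gS.
  rewrite gen_subG; apply/subsetP=> x Xx; rewrite inE (subsetP sXG) //=.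
  by rewrite eqX.
by move/subsetP=> s x /s; rewrite inE => /andP[_ /eqP].
Qed.

Lemma prod_comm_perm (I : eqType) (r1 r2 : seq I) (F : I -> gT) :
  perm_eq r1 r2 -> {in r1 &, forall i j, commute (F i) (F j)} ->
  \prod_(i <- r1) F i = \prod_(i <- r2) F i.
Proof.
elim: r1 r2 => [|a r1 IH] r2 pe cF.
  by move: pe; rewrite perm_sym => /perm_nilP ->.
have ar2 : a \in r2 by rewrite -(perm_mem pe) mem_head.
case/splitPr: ar2 pe => s1 s2 pe.
have pe' : perm_eq r1 (s1 ++ s2).
  have h := perm_catCA s1 [:: a] s2 (a :: s1 ++ s2); rewrite /= perm_refl in h.
  by rewrite -(perm_cons a) (perm_trans pe).
have mem1 : {subset s1 ++ s2 <= a :: r1}.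
  by move=> x; rewrite -(perm_mem pe') => xr; rewrite inE xr orbT.
rewrite big_cons (IH _ pe') ?big_cat ?big_cons /=; last first.
  by move=> i j ir jr; apply: cF; rewrite inE ?ir ?jr orbT.
have ca : commute (F a) (\prod_(i <- s1) F i).
  rewrite big_seq; apply: (big_ind (fun x => commute (F a) x)).
  - exact: commute1.
  - by move=> x y; apply: commuteM.
  by move=> i is1; apply: cF; rewrite ?mem_head // mem1 // mem_cat is1.
by rewrite mulgA ca -mulgA.
Qed.

Lemma prodD1 (I : finType) (i : I) (F : I -> gT) :
  (forall a b, commute (F a) (F b)) ->
  \prod_j F j = F i * \prod_(j | j != i) F j.
Proof.
move=> cF.
transitivity (\prod_(j <- i :: [seq j <- index_enum I | j != i]) F j).
  apply: prod_comm_perm; last by move=> a b _ _; apply: cF.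
  rewrite -rem_filter ?index_enum_uniq //.
  by apply: perm_to_rem; rewrite mem_index_enum.
by rewrite big_cons big_filter.
Qed.


Lemma ext_basis (b : seq gT) G (T : {group gT}) (t : gT -> gT) :
  \big[dprod/1]_(x <- b) <[x]> = G -> abelian T ->
  (forall x, x \in b -> t x \in T /\ #[t x] %| #[x]) ->
  exists f : gT -> gT, [/\ {in G &, {morph f : x y / x * y}},
     {in G, forall x, f x \in T} & {in b, f =1 t}].
Proof.
elim: b G => [|x b IH] G.
  rewrite big_nil => <- _ _; exists (fun _ => 1); split.
  - by move=> y z _ _; rewrite mulg1.
  - by move=> y _; rewrite group1.
  by [].
rewrite big_cons => dG cT ht.
have [[_ G' _ defG'] _ _ _] := dprodP dG.
rewrite defG' in dG.
have [f' [f'M f'T f't]] : exists f' : gT -> gT, [/\ {in G' &, {morph f' : x y / x * y}},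
     {in G', forall x, f' x \in T} & {in b, f' =1 t}].
  by apply: IH => // y yb; apply: ht; rewrite inE yb orbT.
have [txT dvd] := ht x (mem_head _ _).
pose em := eltm dvd.
pose fm := Morphism f'M.
have sfT : fm @* G' \subset T.
  by rewrite morphimEdom; apply/subsetP=> _ /imsetP[y Gy ->]; apply: f'T.
have seT : em @* <[x]> \subset T by rewrite im_eltm cycle_subG.
have cfHK : fm @* G' \subset 'C(em @* <[x]>) by apply: sub_abelian_cent2 cT _ _.
exists (dprodm dG cfHK); split.
- by move=> y z Gy Gz; rewrite morphM.
- move=> y; rewrite -(dprodW dG) => /mulsgP[a c Xa Gc ->].
  rewrite dprodmE // groupM //.
    by apply: (subsetP seT); apply: mem_morphim.
  by apply: (subsetP sfT); apply: mem_morphim.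
move=> y; rewrite inE => /predU1P[->|yb].
  by rewrite dprodmEl ?cycle_id //= eltm_id.
have Gy : y \in G'.
  rewrite -(bigdprodWY defG') mem_gen // bigcup_seq.
  by apply: (subsetP (bigcup_sup y yb)); apply: cycle_id.
by rewrite dprodmEr //= f't.
Qed.

End Generic.
Section Main.
Variables (p : nat) (gT : finGroupType) (A : {group gT}) (k : nat)
  (Ai : 'I_k -> {group gT}).
Hypotheses (pr_p : prime p) (cA : abelian A) (pA : p.-group A)
  (defA : \big[dprod/1]_(i < k) Ai i = A)
  (homo : forall i, homocyclic (Ai i))
  (dexp : forall i j, i != j -> exponent (Ai i) != exponent (Ai j)).

Local Notation proj := (proj_comp Ai).

Lemma sAiA i : Ai i \subset A.
Proof. by rewrite -(bigdprodWY defA) sub_gen // (bigcup_sup i). Qed.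

Lemma cAi i : abelian (Ai i). Proof. exact: abelianS (sAiA i) cA. Qed.
Lemma pAi i : p.-group (Ai i). Proof. exact: pgroupS (sAiA i) pA. Qed.

Lemma compl_spec i : exists2 C : {group gT}, compl_comp Ai i = C &
  [/\ Ai i \x C = A, C :&: Ai i = 1 & forall j, j != i -> Ai j \subset C].
Proof.
have := defA; rewrite (bigD1 i) //= => dA.
have [[_ C _ defC] _ _ _] := dprodP dA.
rewrite defC in dA.
have [_ _ _ ti] := dprodP dA.
exists C; first by rewrite /compl_comp (bigdprodW defC).
split=> //; first by rewrite setIC.
move=> j ji; rewrite -(bigdprodWY defC) sub_gen // (bigcup_sup j) //.
Qed.

Lemma projM i : {in A &, {morph proj i : x y / x * y}}.
Proof.
have [C eC [dA ti _]] := compl_spec i; rewrite /proj_comp eC.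
apply: remgrM; last by rewrite -sub_abelian_normal // -(dprodW dA) mulG_subr.
by apply/complP; split=> //; rewrite -(dprodWC dA).
Qed.

Lemma proj_in i x : x \in A -> proj i x \in Ai i.
Proof.
have [C eC [dA ti _]] := compl_spec i; rewrite /proj_comp eC.
by move=> Ax; apply: mem_remgr; rewrite (dprodWC dA).
Qed.

Lemma proj_id i x : x \in Ai i -> proj i x = x.
Proof. by have [C eC [dA ti _]] := compl_spec i; rewrite /proj_comp eC; apply: remgr_id. Qed.

Lemma proj_other i j x : j != i -> x \in Ai j -> proj i x = 1.
Proof.
have [C eC [dA ti sC]] := compl_spec i; rewrite /proj_comp eC.
by move=> ji Ax; apply: remgr1; apply: (subsetP (sC j ji)).
Qed.

Definition projm i := Morphism (projM i).

Lemma proj_decomp x : x \in A -> x = \prod_(j < k) proj j x.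
Proof.
move=> Ax; have [c [Fc -> _]] := mem_bigdprod defA Ax.
apply: eq_bigr => i _.
have Ac : forall j, true -> c j \in A by move=> j _; apply: (subsetP (sAiA j)); apply: Fc.
rewrite (prodD1 i); last by move=> a b; apply: (centsP cA); apply: Ac.
rewrite projM ?groupM ?group_prod //; last by move=> j _; apply: Ac.
rewrite -[proj i (\prod_(_ | _) _)]/(projm i _) morph_prod; last by move=> j _; apply: Ac.
rewrite big1 ?mulg1 ?proj_id ?Fc //.
  by move=> j /= ji; rewrite (proj_other ji) ?Fc.
exact: Ac.
Qed.


Definition endo (f : gT -> gT) :=
  {in A &, {morph f : x y / x * y}} /\ {in A, forall x, f x \in A}.

Lemma endo1 f : endo f -> f 1 = 1.
Proof. by case=> fM _; exact: (morph1 (Morphism fM)). Qed.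

Lemma endoX f n : endo f -> {in A, forall x, f (x ^+ n) = f x ^+ n}.
Proof. by case=> fM _; exact: (morphX (Morphism fM)). Qed.

Lemma endo_prodm f I (r : seq I) (F : I -> gT) : endo f ->
  (forall i, F i \in A) -> f (\prod_(i <- r) F i) = \prod_(i <- r) f (F i).
Proof. by case=> fM _ FA; exact: (morph_prod (Morphism fM)). Qed.

Lemma endo_aut (u : {perm gT}) : u \in Aut A -> endo u.
Proof.
move=> Au; split; last by move=> x; apply: Aut_closed.
by move=> x y Ax Ay; rewrite -(autmE Au) morphM.
Qed.

Lemma endo_comp f g : endo f -> endo g -> endo (g \o f).
Proof.
case=> fM fA [gM gA]; split=> [x y Ax Ay|x Ax] /=; last by rewrite gA ?fA.
by rewrite fM // gM ?fA.
Qed.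

Lemma endo_mul f g : endo f -> endo g -> endo (fun x => f x * g x).
Proof.
case=> fM fA [gM gA]; split=> [x y Ax Ay|x Ax] /=; last by rewrite groupM ?fA ?gA.
rewrite fM // gM // -!mulgA; congr (_ * _); rewrite !mulgA; congr (_ * _).
by apply: (centsP cA); rewrite ?fA ?gA.
Qed.

Lemma endo_prod I (r : seq I) (F : I -> gT -> gT) : (forall a, endo (F a)) ->
  endo (fun x => \prod_(a <- r) F a x).
Proof.
move=> eF; elim: r => [|a r [IM IA]].
  by split=> [x y _ _|x _]; rewrite !big_nil ?mulg1.
have [aM aA] := endo_mul (eF a) (conj IM IA).
by split=> [x y Ax Ay|x Ax]; rewrite !big_cons ?aM ?aA.
Qed.

Lemma endo_proj i : endo (proj i).
Proof.
split; [exact: projM | by move=> x Ax; apply: (subsetP (sAiA i)); apply: proj_in].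
Qed.

Local Notation P i := (pmult p (Ai i)).

Lemma memP i z : (z \in P i) = (z \in 'Mho^1(Ai i)).
Proof. by rewrite pmult_Mho // pAi. Qed.

Lemma MhoAb i : 'Mho^1(Ai i) = [set x ^+ p | x in Ai i].
Proof. by rewrite (MhoEabelian 1 (pAi i) (cAi i)) expn1. Qed.

Lemma PAi i : P i \subset Ai i.
Proof. by apply/subsetP=> z; rewrite memP; apply: subsetP; apply: Mho_sub. Qed.

Lemma normP i : A \subset 'N(P i).
Proof. by apply: sub_abelian_norm => //; apply: subset_trans (PAi i) (sAiA i). Qed.

Lemma cosetAM i : {in A &, {morph coset (P i) : x y / x * y}}.
Proof. by move=> x y Ax Ay; rewrite morphM // (subsetP (normP i)). Qed.

Definition Lf i (f : gT -> gT) (x : gT) := coset (P i) (proj i (f x)).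

Lemma Lf_morph i f : endo f -> {in A &, {morph Lf i f : x y / x * y}}.
Proof.
case=> fM fA x y Ax Ay; rewrite /Lf fM // projM ?fA // cosetAM //;
  by apply: (subsetP (sAiA i)); apply: proj_in; apply: fA.
Qed.

Lemma MS i f z : endo f -> z \in P i -> proj i (f z) \in P i.
Proof.
move=> ef; rewrite !memP MhoAb => /imsetP[w Aw ->].
have Aw' : w \in A by apply: (subsetP (sAiA i)).
rewrite (endoX _ ef) // (endoX _ (endo_proj i)); last by case: ef => _ ->.
by apply: imset_f; apply: proj_in; case: ef => _ ->.
Qed.

Lemma CL i j f g x : i != j -> endo f -> endo g -> x \in Ai i ->
  proj i (g (proj j (f x))) \in P i.
Proof.
move=> ij ef eg Aix.
have Ax : x \in A by apply: (subsetP (sAiA i)).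
have fA : f x \in A by case: ef => _ ->.
set y := proj j (f x).
have Ajy : y \in Ai j by apply: proj_in.
have Ay : y \in A by apply: (subsetP (sAiA j)).
have gA : forall z, z \in A -> g z \in A by case: eg.
have epf : endo (proj j \o f) := endo_comp ef (endo_proj j).
have epg : endo (proj i \o g) := endo_comp eg (endo_proj i).
have yei : y ^+ exponent (Ai i) = 1.
  by rewrite -[y]/((proj j \o f) x) -(endoX _ epf) // expg_exponent // (endo1 epf).
have pnat_e : forall l, p.-nat (exponent (Ai l)) by move=> l; rewrite pnat_exponent pAi.
have := dexp ij; rewrite neq_ltn => /orP[lt|lt].
  have : y \in 'Mho^1(Ai j) by apply: (homocyclic_low pr_p (pAi j) (homo j) Ajy (pnat_e i) yei lt).
  rewrite MhoAb => /imsetP[w Aw yw].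
  have Aw' : w \in A by apply: (subsetP (sAiA j)).
  rewrite yw -[proj i _]/((proj i \o g) _) (endoX _ epg) // memP MhoAb.
  by apply: imset_f; apply: proj_in; apply: gA.
rewrite memP; apply: (homocyclic_low pr_p (pAi i) (homo i)) (pnat_e j) _ lt.
  by apply: proj_in; apply: gA.
rewrite -[proj i _]/((proj i \o g) _) -(endoX _ epg) // expg_exponent //.
exact: endo1.
Qed.


Lemma L1 i f g x : endo f -> endo g -> x \in Ai i ->
  Lf i (g \o f) x = Lf i g (proj i (f x)).
Proof.
move=> ef eg Aix.
have Ax : x \in A by apply: (subsetP (sAiA i)).
have fA : f x \in A by case: ef => _ ->.
have pA' : forall j, proj j (f x) \in A.
  by move=> j; apply: (subsetP (sAiA j)); apply: proj_in.
pose h := Morphism (Lf_morph i eg).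
have cH : forall a b, a \in A -> b \in A -> commute (h a) (h b).
  by move=> a b Aa Ab; rewrite /commute -!morphM // (centsP cA).
rewrite [LHS]/Lf /= {1}(proj_decomp fA).
rewrite -[coset _ (proj i (g (\prod_(j < k) _)))]/(h _) morph_prod; last by move=> j _.
rewrite (prodD1 i); last by move=> a b; apply: cH.
rewrite big1 ?mulg1 // => j ji; rewrite /= /Lf coset_id //.
by apply: (CL _ ef eg Aix); rewrite eq_sym.
Qed.

Lemma Lf_coset i f x z : endo f -> x \in A -> z \in P i -> Lf i f (z * x) = Lf i f x.
Proof.
move=> ef Ax Pz.
have Az : z \in A by apply: (subsetP (sAiA i)); apply: (subsetP (PAi i)).
rewrite Lf_morph // {1}/Lf coset_id ?mul1g //; exact: MS.
Qed.

Lemma repr_cosetP i x : x \in Ai i ->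
  exists2 z, z \in P i & repr (coset (P i) x) = z * x.
Proof.
move=> Aix.
have Nx : x \in 'N(P i) by apply: (subsetP (normP i)); apply: (subsetP (sAiA i)).
have := mem_repr_coset (coset (P i) x); rewrite val_coset //.
by case/rcosetP=> z Pz ->; exists z.
Qed.

Lemma LamE i (u : {perm gT}) x : endo u -> x \in Ai i ->
  @Lambda_i gT p k Ai i u (coset (P i) x) = Lf i u x.
Proof.
move=> eu Aix; rewrite /Lambda_i; have [z Pz ->] := repr_cosetP Aix.
rewrite -/(Lf i u (z * x)) Lf_coset //; exact: (subsetP (sAiA i)).
Qed.


Lemma repr_in i c : c \in Ai i / P i -> repr c \in Ai i.
Proof.
case/morphimP=> y _ Ay ->; have [z Pz ->] := repr_cosetP Ay.
by rewrite groupM // (subsetP (PAi i)).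
Qed.

Lemma psiM i (psi : {perm coset_of (P i)}) : psi \in Aut (Ai i / P i) ->
  {in Ai i / P i &, {morph psi : x y / x * y}}.
Proof. by move=> Ap x y Ax Ay; rewrite -(autmE Ap) morphM. Qed.

Lemma lift_comp i (psi : {perm coset_of (P i)}) : psi \in Aut (Ai i / P i) ->
  exists f : gT -> gT, [/\ {in Ai i &, {morph f : x y / x * y}},
    {in Ai i, forall x, f x \in Ai i} &
    {in Ai i, forall x, coset (P i) (f x) = psi (coset (P i) x)}].
Proof.
move=> Ap.
have [b defG ob] := abelian_structure (cAi i).
have bG : forall x, x \in b -> x \in Ai i.
  move=> x xb; rewrite -(bigdprodWY defG) mem_gen // bigcup_seq.
  by apply: (subsetP (bigcup_sup x xb)); apply: cycle_id.
pose t x := repr (psi (coset (P i) x)).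
have ht : forall x, x \in b -> t x \in Ai i /\ #[t x] %| #[x].
  move=> x xb.
  have tA : t x \in Ai i.
    by apply: repr_in; apply: (Aut_closed Ap); apply: mem_quotient; apply: bG.
  split=> //.
  have : #[x] \in map order b by apply: map_f.
  rewrite ob abelian_type_homocyclic // mem_nseq => /andP[_ /eqP ->].
  exact: dvdn_exponent.
have [f [fM fG ft]] := ext_basis defG (cAi i) ht.
exists f; split => //.
have Ni : Ai i \subset 'N(P i) := subset_trans (sAiA i) (normP i).
have g1M : {in Ai i &, {morph (fun y => coset (P i) (f y)) : x y / x * y}}.
  by move=> x y Ax Ay /=; rewrite fM // morphM // (subsetP Ni) ?fG.
have g2M : {in Ai i &, {morph (fun y => psi (coset (P i) y)) : x y / x * y}}.
  by move=> x y Ax Ay /=; rewrite morphM ?(subsetP Ni) // psiM // mem_quotient.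
have := morph_agree g1M g2M _ (X := \bigcup_(x <- b) <[x]>).
rewrite (bigdprodWY defG); apply.
  by rewrite bigcup_seq; apply/bigcupsP=> x xb; rewrite cycle_subG bG.
move=> y; rewrite bigcup_seq => /bigcupP[x xb /cycleP[n ->]] /=.
have Ax := bG x xb.
rewrite -[coset (P i) (f _)]/(Morphism g1M _) morphX //= ft //.
rewrite -[psi (coset (P i) _)]/(Morphism g2M _) morphX //=.
by rewrite /t coset_reprK.
Qed.


Lemma lift_all (psi : forall i, {perm coset_of (P i)}) :
  (forall i, psi i \in Aut (Ai i / P i)) ->
  exists phi, endo phi /\
    forall i, {in Ai i, forall x, Lf i phi x = psi i (coset (P i) x)}.
Proof.
move=> Ap.
have [F HF] := fin_all_exists (fun i => lift_comp (Ap i)).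
have eF : forall a, endo (fun x => F a (proj a x)).
  move=> a; have [FM FA _] := HF a; split.
    by move=> x y Ax Ay /=; rewrite projM // FM // proj_in.
  by move=> x Ax /=; apply: (subsetP (sAiA a)); apply: FA; apply: proj_in.
have ephi := endo_prod (index_enum 'I_k) eF.
exists (fun x => \prod_(a < k) F a (proj a x)); split=> // i x Aix.
have Ax : x \in A by apply: (subsetP (sAiA i)).
have [_ FA Fc] := HF i.
rewrite /Lf (prodD1 i); last by move=> a b; apply: (centsP cA); [case: (eF a) => _ -> | case: (eF b) => _ ->].
rewrite big1 ?mulg1; last first.
  move=> j ji; rewrite (@proj_other j i x) 1?eq_sym //.
  have [FM _ _] := HF j; exact: (morph1 (Morphism FM)).
by rewrite proj_id // proj_id ?Fc // FA.
Qed.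


Lemma surj_endo f (fM : {in A &, {morph f : x y / x * y}}) :
  {in A, forall x, f x \in A} ->
  (forall i, {in Ai i / P i, forall t, exists2 x, x \in Ai i & Lf i f x = t}) ->
  Morphism fM @* A = A.
Proof.
move=> fA hs.
have ef : endo f by [].
pose Fm := Morphism fM.
pose M := (Fm @* A <*> 'Mho^1(A))%G.
have MhoM : forall i, 'Mho^1(Ai i) \subset M.
  move=> i; apply: subset_trans (joing_subr _ _); exact: MhoS (sAiA i).
have FM : forall y, y \in A -> f y \in M.
  by move=> y Ay; apply: (subsetP (joing_subl _ _)); apply: (mem_morphim Fm).
have pnat_e : forall l, p.-nat (exponent (Ai l)) by move=> l; rewrite pnat_exponent pAi.
have key : forall n i, exponent (Ai i) < n -> Ai i \subset M.
  elim=> [|n IH] i lt //; apply/subsetP=> x Aix.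
  have Ax : x \in A by apply: (subsetP (sAiA i)).
  have [y Aiy ey] := hs i (coset (P i) x) (mem_quotient _ Aix).
  have Ay : y \in A by apply: (subsetP (sAiA i)).
  have fyA : f y \in A by apply: fA.
  have pjA : forall j, proj j (f y) \in A.
    by move=> j; apply: (subsetP (sAiA j)); apply: proj_in.
  have oth : forall j, j != i -> proj j (f y) \in M.
    move=> j ji; have := dexp ji; rewrite neq_ltn => /orP[ltj|ltj].
      by apply: (subsetP (IH j _)); [apply: leq_trans ltj _ | apply: proj_in].
    have epf : endo (proj j \o f) := endo_comp ef (endo_proj j).
    apply: (subsetP (MhoM j)).
    apply: (homocyclic_low pr_p (pAi j) (homo j) (proj_in _ fyA) (pnat_e i) _ ltj).
    by rewrite -[proj j _]/((proj j \o f) y) -(endoX _ epf) // expg_exponent // (endo1 epf).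
  have prodM : \prod_(j | j != i) proj j (f y) \in M.
    by apply: group_prod => j; apply: oth.
  have piM : proj i (f y) \in M.
    have := proj_decomp fyA; rewrite (prodD1 i); last first.
      by move=> a b; apply: (centsP cA).
    move=> e; have -> : proj i (f y) = f y * (\prod_(j | j != i) proj j (f y))^-1.
      by rewrite {2}e mulgK.
    by rewrite groupM ?groupV ?FM.
  have Nx : x \in 'N(P i) by apply: (subsetP (normP i)).
  have Ni : proj i (f y) \in 'N(P i) by apply: (subsetP (normP i)).
  have Pd : x * (proj i (f y))^-1 \in P i.
    apply: coset_idr; first by rewrite groupM ?groupV.
    rewrite morphM ?groupV // morphV //.
    change (coset (P i) x * (coset (P i) (proj i (f y)))^-1 = 1).
    by rewrite -ey /Lf mulgV.
  rewrite -(mulgKV (proj i (f y)) x) groupM //.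
  by apply: (subsetP (MhoM i)); rewrite -memP.
have sAM : A \subset M.
  rewrite -(bigdprodWY defA) gen_subG; apply/bigcupsP=> i _.
  exact: (key (exponent (Ai i)).+1).
have defM : 'Phi(A) <*> (Fm @* A) = A.
  have sFA : Fm @* A \subset A.
    by rewrite morphimEdom; apply/subsetP=> _ /imsetP[y Ay ->]; apply: fA.
  apply/eqP; rewrite eqEsubset join_subG Phi_sub sFA /= (Phi_Mho pA cA).
  by rewrite joingC.
by have := Phi_nongen defM; rewrite genGid.
Qed.


Lemma QP i c : c \in Ai i / P i -> exists2 x, x \in Ai i & c = coset (P i) x.
Proof. by case/morphimP=> x _ Ax ->; exists x. Qed.

Lemma Lf_ext i f g x : (forall y, y \in A -> f y = g y) -> x \in A -> Lf i f x = Lf i g x.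
Proof. by move=> e Ax; rewrite /Lf e. Qed.

Lemma LamQ i (u : {perm gT}) c : endo u -> c \in Ai i / P i ->
  @Lambda_i gT p k Ai i u c \in Ai i / P i.
Proof.
move=> eu /QP[x Ax ->]; rewrite LamE //.
by apply: mem_quotient; apply: proj_in; case: eu => _ uA; apply: uA; apply: (subsetP (sAiA i)).
Qed.

Lemma dir1 (hT : finGroupType) (H : {group hT}) (alpha beta : hT -> {perm gT}) :
  is_rep A H alpha -> is_rep A H beta -> rep_equiv A H alpha beta ->
  forall i, lam_equiv p Ai i H alpha beta.
Proof.
move=> [_ aA] [_ bA] [psi Apsi hpsi] i.
have ep := endo_aut Apsi.
have epi := endo_aut (groupVr Apsi).
pose g := @Lambda_i gT p k Ai i psi.
have sAN : Ai i \subset 'N(P i) := subset_trans (sAiA i) (normP i).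
have gM : {in Ai i / P i &, {morph g : c d / c * d}}.
  move=> _ _ /QP[x Ax ->] /QP[y Ay ->].
  rewrite -morphM ?(subsetP sAN) // /g !LamE ?groupM // Lf_morph //;
    exact: (subsetP (sAiA i)).
pose Gm := Morphism gM.
have ginv : {in Ai i / P i, forall c, @Lambda_i gT p k Ai i psi^-1 (g c) = c}.
  move=> _ /QP[x Ax ->].
  have Ax' : x \in A by apply: (subsetP (sAiA i)).
  rewrite /g LamE // /Lf LamE //; last by apply: proj_in; case: ep => _ ->.
  rewrite -/(Lf i psi^-1 _) -(L1 ep epi Ax) /Lf /= permK proj_id //.
have injg : 'injm Gm.
  apply/injmP=> c d Qc Qd e; rewrite -(ginv c Qc) -(ginv d Qd).
  by rewrite -[g c]/(Gm c) e.
have sGQ : Gm @* (Ai i / P i) \subset Ai i / P i.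
  by rewrite morphimEdom; apply/subsetP=> _ /imsetP[c Qc ->]; apply: LamQ.
have imG : Gm @* (Ai i / P i) = Ai i / P i.
  apply/eqP; rewrite eqEcard sGQ /= (card_injm injg) //.
exists (aut injg imG).
  by have h0 := Aut_aut injg imG; exact h0.
move=> h Hh c Qc.
have eah := endo_aut (aA h Hh); have ebh := endo_aut (bA h Hh).
have Qa := LamQ eah Qc.
have e1 := autE injg imG Qa.
have e2 := autE injg imG Qc.
suff key : g (@Lambda_i gT p k Ai i (alpha h) c) = @Lambda_i gT p k Ai i (beta h) (g c).
  by rewrite /= in e1 e2; exact (etrans e1 (etrans key (congr1 _ (esym e2)))).
case/QP: Qc => x Ax ->.
have Ax' : x \in A by apply: (subsetP (sAiA i)).
have pin : forall u, endo u -> proj i (u x) \in Ai i.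
  by move=> u [_ uA]; apply: proj_in; apply: uA.
rewrite /g (LamE eah Ax) /Lf (LamE ep (pin _ eah)) (LamE ep Ax) /Lf (LamE ebh (pin _ ep)).
rewrite -/(Lf i psi _) -/(Lf i (beta h) _) -(L1 eah ep Ax) -(L1 ep ebh Ax).
apply: Lf_ext => // y Ay /=.
by rewrite -(hpsi h Hh) conjgE !permM permK.
Qed.



Lemma dir2 (hT : finGroupType) (H : {group hT}) (alpha beta : hT -> {perm gT}) :
  ~~ (p %| #|H|) -> is_rep A H alpha -> is_rep A H beta ->
  (forall i, lam_equiv p Ai i H alpha beta) -> rep_equiv A H alpha beta.
Proof.
move=> pH [/morphicP aM aA] [/morphicP bM bA] hl.
have [psi Apsi hpsi] := fin_all_exists2 hl.
have [phi [ephi hphi]] := lift_all Apsi.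
pose F g := if g \in H then (fun x => (beta g)^-1 (phi (alpha g x))) else (fun _ : gT => 1).
have eF : forall g, endo (F g).
  move=> g; rewrite /F; case: ifP => Hg.
    exact: endo_comp (endo_comp (endo_aut (aA g Hg)) ephi) (endo_aut (groupVr (bA g Hg))).
  by split; [move=> x y _ _; rewrite mulg1 | move=> x _; rewrite group1].
pose f x := \prod_(g <- enum H) F g x.
have ef : endo f := endo_prod (enum H) eF.
have FA : forall g x, x \in A -> F g x \in A by move=> g x Ax; case: (eF g) => _ ->.
have inter : forall h x, h \in H -> x \in A -> f (alpha h x) = beta h (f x).
  move=> h x Hh Ax.
  have ebh := endo_aut (bA h Hh).
  rewrite /f (endo_prodm _ ebh); last by move=> g; apply: FA.
  transitivity (\prod_(g <- map (mulg h) (enum H)) beta h (F g x)).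
    rewrite big_map big_seq [RHS]big_seq; apply: eq_bigr => g; rewrite mem_enum => Hg.
    have Hhg : h * g \in H by rewrite groupM.
    rewrite /F Hg Hhg (aM h g Hh Hg) (bM h g Hh Hg) permM invMg permM permKV //.
  apply: prod_comm_perm.
    apply: uniq_perm; first by rewrite (map_inj_uniq (mulgI h)) enum_uniq.
      exact: enum_uniq.
    move=> y; rewrite mem_enum; apply/mapP/idP => [[g]|Hy].
      by rewrite mem_enum => Hg ->; rewrite groupM.
    by exists (h^-1 * y); rewrite ?mem_enum ?groupM ?groupV ?mulKVg.
  move=> a b _ _; apply: (centsP cA); apply: (Aut_closed (bA h Hh)); exact: FA.
have key : forall i g x, g \in H -> x \in Ai i ->
    coset (P i) (proj i (F g x)) = psi i (coset (P i) x).
  move=> i g x Hg Aix.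
  have Ax : x \in A by apply: (subsetP (sAiA i)).
  have ea := endo_aut (aA g Hg); have eb := endo_aut (bA g Hg).
  have ebi := endo_aut (groupVr (bA g Hg)).
  have epa := endo_comp ea ephi.
  have pin : forall u y, endo u -> y \in A -> proj i (u y) \in Ai i.
    by move=> u y [_ uA] Ay; apply: proj_in; apply: uA.
  rewrite /F Hg.
  change (Lf i ((beta g)^-1 \o (phi \o alpha g)) x = psi i (coset (P i) x)).
  rewrite (L1 epa ebi Aix).
  set w := proj i ((phi \o alpha g) x).
  have ew : coset (P i) w = Lf i (phi \o alpha g) x by [].
  rewrite (L1 ea ephi Aix) (hphi i _ (pin _ _ ea Ax)) -/(Lf i (alpha g) x) -(LamE ea Aix) in ew.
  rewrite (hpsi i g Hg _ (mem_quotient _ Aix)) in ew.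
  set c' := psi i (coset (P i) x) in ew *.
  have Qc' : c' \in Ai i / P i by apply: (Aut_closed (Apsi i)); apply: mem_quotient.
  have Az := repr_in Qc'.
  have ez : coset (P i) (repr c') = c' := coset_reprK c'.
  rewrite -ez (LamE eb Az) in ew.
  have Az' : repr c' \in A by apply: (subsetP (sAiA i)).
  have wA : w \in Ai i by apply: pin.
  have vA := pin _ _ eb Az'.
  have Nw : w \in 'N(P i) by apply: (subsetP (normP i)); apply: (subsetP (sAiA i)).
  have Nv : proj i (beta g (repr c')) \in 'N(P i).
    by apply: (subsetP (normP i)); apply: (subsetP (sAiA i)).
  have Pu : w * (proj i (beta g (repr c')))^-1 \in P i.
    apply: coset_idr; first by rewrite groupM ?groupV.
    rewrite morphM ?groupV // morphV //.
    change (coset (P i) w * (coset (P i) (proj i (beta g (repr c'))))^-1 = 1).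
    by rewrite ew /Lf mulgV.
  rewrite -(mulgKV (proj i (beta g (repr c'))) w) Lf_coset //; last first.
    by apply: (subsetP (sAiA i)).
  rewrite -(L1 eb ebi Az) /Lf /= permK proj_id //.
have hL : forall i x, x \in Ai i -> Lf i f x = (psi i (coset (P i) x)) ^+ #|H|.
  move=> i x Aix.
  have Ax : x \in A by apply: (subsetP (sAiA i)).
  have cpM : {in A &, {morph (fun y => coset (P i) (proj i y)) : a b / a * b}}.
    move=> a b Aa Ab /=; rewrite projM // cosetAM //;
      by apply: (subsetP (sAiA i)); apply: proj_in.
  rewrite /Lf /f -[coset _ (proj i (\prod_(g <- _) _))]/(Morphism cpM _) morph_prod;
    last by move=> g _; apply: FA.
  transitivity (\prod_(g <- enum H) psi i (coset (P i) x)).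
    rewrite !big_seq; apply: eq_bigr => g; rewrite mem_enum => Hg /=.
    exact: key.
  rewrite cardE; elim: (enum H) => [|a r IH]; first by rewrite big_nil expg0.
  by rewrite big_cons IH /= expgS.
have hs : forall i, {in Ai i / P i, forall t, exists2 x, x \in Ai i & Lf i f x = t}.
  move=> i t Qt.
  pose m := expg_invn (Ai i / P i) #|H|.
  have co : coprime #|Ai i / P i| #|H|.
    apply: (@pnat_coprime p); first exact: quotient_pgroup (pAi i).
    by rewrite p'natE.
  have Qs : (psi i)^-1 (t ^+ m) \in Ai i / P i.
    by apply: (Aut_closed (groupVr (Apsi i))); apply: groupX.
  have [x Ax ex] := QP Qs.
  exists x => //; rewrite hL // -ex permKV -expgM mulnC expgM.
  exact: (expgK co Qt).
case: ef => fM fA.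
have img := @surj_endo f fM fA hs.
have injf : 'injm (Morphism fM) by rewrite -card_im_injm img.
exists (aut injf img); first by have h0 := Aut_aut injf img; exact h0.
move=> h Hh.
suff e : alpha h * aut injf img = aut injf img * beta h.
  by rewrite conjgE ?mulgA -?mulgA e mulKg.
have Aa := Aut_aut injf img.
apply/permP => z; rewrite !permM.
case Az: (z \in A).
  have Ahz : alpha h z \in A by apply: (Aut_closed (aA h Hh)).
  rewrite (autE injf img Ahz) (autE injf img Az) /=.
  exact: inter.
have nAz := negbT Az.
rewrite (out_Aut (aA h Hh) nAz) (out_Aut Aa nAz) (out_Aut (bA h Hh) nAz) //.
Qed.

End Main.

Theorem lemma3p8 (p : nat) (gT : finGroupType) (A : {group gT}) (k : nat)
  (Ai : 'I_k -> {group gT}) (hT : finGroupType) (H : {group hT})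
  (alpha beta : hT -> {perm gT}) :
  prime p -> abelian A -> p.-group A ->
  \big[dprod/1]_(i < k) Ai i = A ->
  (forall i, Ai i :!=: 1) ->
  (forall i, homocyclic (Ai i)) ->
  (forall i j, i != j -> exponent (Ai i) != exponent (Ai j)) ->
  ~~ (p %| #|H|) ->
  is_rep A H alpha -> is_rep A H beta ->
  rep_equiv A H alpha beta <-> (forall i, lam_equiv p Ai i H alpha beta).
Proof.
move=> pr cA pA dA _ ho de pH ra rb; split.
  exact: (dir1 pr cA pA dA ho de ra rb).
exact: (dir2 pr cA pA dA ho de pH ra rb).
Qed.
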